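(* Let $G$ be a unimodular locally compact group with Haar measure $m$, and let $\nu$ be a lower translation bounded measure on $G$. Let $B_l\subseteq G$ be a compact symmetric unit neighborhood and $C_l$ a positive number such that $\nu(B_lx)\ge C_l$ for all $x\in G$. Then for every nonempty compact $A\subseteq G$, \[ \nu(B_l A)\ge \frac{C_l}{m(B_l^2)} \cdot m(A). \]
   Context: A measure is a positive Borel measure; $\nu$ is lower translation bounded if there exist $C>0$ and a compact symmetric unit neighborhood $B$ with $\inf_{x\in G}\nu(Bx)\ge C$. $B_l^2=B_lB_l$, and $B_lA=\{ba:b\in B_l,a\in A\}$. *)

(* Defs.v *)
From HB Require Import structures.
From mathcomp Require Import all_boot all_order all_algebra.
From mathcomp Require Import all_classical all_reals all_analysis.
Set Implicit Arguments. Unset Strict Implicit. Unset Printing Implicit Defensive.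
Import Order.TTheory GRing.Theory Num.Theory.
Local Open Scope classical_set_scope.
Local Open Scope ring_scope.

(* The Borel sigma-algebra of a (pointed) topological space G is the one
   generated by the open sets; measures on G are measures on the type
   [borel G] = [g_sigma_algebraType (@open G)] (convertible to G). *)
Definition borel (G : ptopologicalType) := g_sigma_algebraType (@open G).

Definition lc_group (G : ptopologicalType)
  (mul : G -> G -> G) (inv : G -> G) (e : G) : Prop :=
  [/\ (forall x y z, mul x (mul y z) = mul (mul x y) z),
      (forall x, mul e x = x) /\ (forall x, mul x e = x),
      (forall x, mul (inv x) x = e) /\ (forall x, mul x (inv x) = e),
      continuous (fun p : G * G => mul p.1 p.2) /\ continuous inv &
      hausdorff_space G /\ locally_compact [set: G]].

Definition setmul (G : Type) (mul : G -> G -> G) (A B : set G) : set G :=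
  [set z | exists a b, [/\ A a, B b & z = mul a b]].

Definition ltrans (G : Type) (mul : G -> G -> G) (x : G) (A : set G) : set G :=
  (fun a => mul x a) @` A.
Definition rtrans (G : Type) (mul : G -> G -> G) (A : set G) (x : G) : set G :=
  (fun a => mul a x) @` A.

(* A (left) Haar measure: a nonzero left-invariant Radon measure, i.e. a
   Borel measure finite on compact sets, outer regular on Borel sets and
   inner regular (by compact sets) on open sets. *)
Definition haar_measure (R : realType) (G : ptopologicalType)
  (mul : G -> G -> G) (m : set (borel G) -> \bar R) : Prop :=
  [/\ (forall (x : G) (A : set (borel G)), measurable A ->
          m (ltrans mul x A) = m A),
      (forall K : set G, compact K -> (m K < +oo)%E),
      (forall A : set (borel G), measurable A ->
          m A = ereal_inf [set m U | U in [set U : set G | open U /\ A `<=` U]]),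
      (forall U : set G, open U ->
          m U = ereal_sup [set m K | K in [set K : set G | compact K /\ K `<=` U]]) &
      m [set: G] != 0%E].

(* Unimodularity (trivial modular function): the Haar measure m is also
   right invariant. *)
Definition unimodular (R : realType) (G : ptopologicalType)
  (mul : G -> G -> G) (m : set (borel G) -> \bar R) : Prop :=
  forall (x : G) (A : set (borel G)), measurable A -> m (rtrans mul A x) = m A.

(* Main.v *)
Require Import Defs.
From HB Require Import structures.
From mathcomp Require Import all_boot all_order all_algebra.
From mathcomp Require Import all_classical all_reals all_analysis.
Import Order.TTheory GRing.Theory Num.Theory.
Local Open Scope classical_set_scope.
Local Open Scope ring_scope.

Section S.
Variables (G : ptopologicalType) (mul : G -> G -> G).
Hypothesis cmul : continuous (fun p : G * G => mul p.1 p.2).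
Hypothesis hG : hausdorff_space G.

Lemma setmul_img (X Y : set G) : setmul mul X Y = (fun p : G * G => mul p.1 p.2) @` (X `*` Y).
Proof.
apply/seteqP; split => z.
  by case=> a [b [Xa Yb ->]]; exists (a, b).
by case=> -[a b] [/= Xa Yb] <-; exists a, b.
Qed.

Lemma compact_setmul (X Y : set G) : compact X -> compact Y -> compact (setmul mul X Y).
Proof.
move=> cX cY; rewrite setmul_img; apply: continuous_compact.
  exact: continuous_subspaceT.
exact: compact_setX.
Qed.

Lemma rtrans_setmul (X : set G) x : rtrans mul X x = setmul mul X [set x].
Proof.
apply/seteqP; split => z.
  by case=> a Xa <-; exists a, x.
by case=> a [b [Xa -> ->]]; exists a.
Qed.

Lemma compact_meas (X : set G) : compact X -> measurable (X : set (borel G)).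
Proof.
move=> /(compact_closed hG) cX.
rewrite -[X]setCK; apply: measurableC.
apply: sub_sigma_algebra. exact: closed_openC.
Qed.

Fixpoint inl (x : G) (s : seq G) : Prop :=
  if s is y :: s' then y = x \/ inl x s' else False.

Definition bigU (f : G -> set G) (s : seq G) : set G := \big[setU/set0]_(x <- s) f x.

Fixpoint disj (f : G -> set G) (s : seq G) : Prop :=
  match s with
  | [::] => True
  | x :: s' => (forall y, inl y s' -> f x `&` f y = set0) /\ disj f s'
  end.

Lemma bigU_cons f x s : bigU f (x :: s) = f x `|` bigU f s.
Proof. by rewrite /bigU big_cons. Qed.

Lemma bigU_sub f s X : (forall x, inl x s -> f x `<=` X) -> bigU f s `<=` X.
Proof.
elim: s => [|x s IH] H; first by rewrite /bigU big_nil.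
rewrite bigU_cons subUset; split; first by apply: H; left.
by apply: IH => y Hy; apply: H; right.
Qed.

Lemma sub_bigU f s x : inl x s -> f x `<=` bigU f s.
Proof.
elim: s => [|y s IH] //= [->|Hx]; rewrite bigU_cons.
  exact: subsetUl.
exact: subset_trans (IH Hx) (@subsetUr _ _ _).
Qed.

Lemma bigU_meas f s : (forall x, measurable (f x : set (borel G))) ->
  measurable (bigU f s : set (borel G)).
Proof.
move=> H; elim: s => [|x s IH]; first by rewrite /bigU big_nil; exact: measurable0.
by rewrite bigU_cons; apply: measurableU.
Qed.

Lemma bigU_disj f x s : (forall y, inl y s -> f x `&` f y = set0) ->
  f x `&` bigU f s = set0.
Proof.
elim: s => [|y s IH] H; first by rewrite /bigU big_nil setI0.
rewrite bigU_cons setIUr H; last by left.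
by rewrite set0U IH // => z Hz; apply: H; right.
Qed.

Lemma nu_lower (R : realType) (nu : {measure set (borel G) -> \bar R}) f s (C : R) :
  (forall x, measurable (f x : set (borel G))) ->
  (forall x, (C%:E <= nu (f x))%E) -> disj f s ->
  (((size s)%:R * C)%:E <= nu (bigU f s))%E.
Proof.
move=> mf Hf; elim: s => [|x s IH] /=.
  by move=> _; rewrite mul0r.
move=> [Hx Hs]; rewrite bigU_cons measureU //; last 2 first.
- exact: bigU_meas.
- exact: bigU_disj.
rewrite -natr1 mulrDl mul1r EFinD addeC; apply: leeD; [exact: Hf | exact: IH].
Qed.

Lemma m_upper (R : realType) (m : {measure set (borel G) -> \bar R}) f s (b : R) :
  (forall x, measurable (f x : set (borel G))) ->
  (forall x, m (f x) = b%:E) ->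
  (m (bigU f s) <= ((size s)%:R * b)%:E)%E.
Proof.
move=> mf Hf; elim: s => [|x s IH] /=.
  by rewrite mul0r /bigU big_nil measure0.
rewrite bigU_cons.
apply: (@le_trans _ _ (m (f x) + m (bigU f s))%E).
  by apply: measureU2 => //; exact: bigU_meas.
rewrite (Hf x) -natr1 mulrDl mul1r EFinD addeC; apply: leeD => //.
Qed.
End S.
Arguments inl {G}. Arguments bigU {G}. Arguments disj {G}.
Arguments sub_bigU {G f s x}. Arguments bigU_sub {G f s X}.
Arguments bigU_meas {G f s}. Arguments nu_lower {G R nu f s C}.
Arguments m_upper {G R m f s b}. Arguments compact_setmul {G mul} cmul {X Y}.
Arguments compact_meas {G} hG {X}.
Arguments rtrans_setmul {G mul}.

Theorem lemma2p5 (R : realType) (G : ptopologicalType)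
  (mul : G -> G -> G) (inv : G -> G) (e : G)
  (m nu : {measure set (borel G) -> \bar R})
  (B : set G) (C : R) :
  lc_group mul inv e ->
  haar_measure mul m -> unimodular mul m ->
  compact B -> inv @` B = B -> nbhs e B ->
  0 < C -> (forall x : G, (C%:E <= nu (rtrans mul B x))%E) ->
  forall A : set G, compact A -> A !=set0 ->
  ((C / fine (m (setmul mul B B)))%:E * m A <= nu (setmul mul B A))%E.
Proof.
move=> [assoc [idl idr] [invl invr] [cmul cinv] [hG _]] [_ hfin _ _ _] unim.
move=> cB hinvB _ C0 HC A cA _.
set f := rtrans mul B.
set g := rtrans mul (setmul mul B B).
have cBB : compact (setmul mul B B) by exact: compact_setmul.
have mf : forall x, measurable (f x : set (borel G)).
  move=> x; apply: compact_meas => //; rewrite /f rtrans_setmul.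
  by apply: compact_setmul => //; exact: compact_set1.
have mg : forall x, measurable (g x : set (borel G)).
  move=> x; apply: compact_meas => //; rewrite /g rtrans_setmul.
  by apply: compact_setmul => //; exact: compact_set1.
have cBA := compact_setmul cmul cB cA.
have mBA := compact_meas hG  cBA.
set N := nu (setmul mul B A).
have [Ny|Nfin] := eqVneq N +oo%E; first by rewrite Ny leey.
have NE : N = (fine N)%:E.
  by rewrite fineK // fin_numE Nfin andbT gt_eqF // (lt_le_trans (ltNyr 0%R)) // /N.

pose P n := exists s, size s = n /\ (forall x, inl x s -> A x) /\ disj f s.
have Pbound : forall n, P n -> ((n%:R * C)%:E <= N)%E.
  move=> n [s [<- [sA ds]]]; apply: le_trans (nu_lower mf HC ds) _.
  apply: le_measure; rewrite ?inE; [exact: bigU_meas | exact: mBA |].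
  apply: bigU_sub => x /sA Ax y [b Bb <-]; exists b, x; split => //.
have ubP : forall n, `[< P n >] -> (n <= Num.Def.truncn (fine N / C))%N.
  move=> n /asboolP /Pbound; rewrite NE lee_fin => H.
  rewrite truncn_ge_nat; first by rewrite ler_pdivlMr.
  by apply: divr_ge0; [apply: fine_ge0; rewrite /N | exact: ltW].
have exP : exists n, `[< P n >] by exists 0%N; apply/asboolP; exists [::].
case: (ex_maxnP exP ubP) => n /asboolP [s [sn [sA ds]]] maxn.
have cover : A `<=` bigU g s.
  move=> y Ay.
  have [[x [xs [z [[b Bb fyz] [b' Bb' fxz]]]]]|none] :=
    pselect (exists x, inl x s /\ (f y `&` f x) !=set0).
    apply: (sub_bigU xs); exists (mul (inv b) b').
      exists (inv b), b'; split => //.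
      by rewrite -hinvB; exists b.
    rewrite -assoc fxz -fyz assoc invl idl //.
  exfalso.
  have : `[< P n.+1 >].
    apply/asboolP; exists (y :: s); split; first by rewrite /= sn.
    split; first by move=> x /= [<-|] //; exact: sA.
    split => // x xs; apply: contrapT => ne; apply: none; exists x; split => //.
    exact/set0P/eqP.
  by move=> /maxn; rewrite ltnn.
set b := fine (m (setmul mul B B)).
have mBB := compact_meas hG  cBB.
have mBBE : m (setmul mul B B) = b%:E.
  by rewrite fineK // ge0_fin_numE //; exact: hfin.
have gm : forall x, m (g x) = b%:E by move=> x; rewrite /g unim.
have mA := compact_meas hG  cA.
have HmA : (m A <= (n%:R * b)%:E)%E.
  rewrite -sn; apply: le_trans (m_upper mg gm); apply: le_measure; rewrite ?inE //.
  exact: bigU_meas.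
have AE : m A = (fine (m A))%:E by rewrite fineK // ge0_fin_numE //; exact: hfin.
have HnC := Pbound n (ex_intro _ s (conj sn (conj sA ds))).
move: HmA HnC; rewrite AE NE !lee_fin => HmA HnC.
have b0 : 0 <= b by rewrite fine_ge0.
have a0 : 0 <= fine (m A) by rewrite fine_ge0.
have [b00|bn0] := eqVneq b 0.
  by rewrite b00 invr0 mulr0 mul0r; apply: fine_ge0; rewrite /N.
apply: le_trans HnC.
apply: (@le_trans _ _ (C / b * (n%:R * b))).
  by rewrite ler_wpM2l // divr_ge0 // ltW.
by rewrite mulrCA divfK.
Qed.
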